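(* Let $H$ be a finite simple graph with $n=|V(H)|$ vertices, let the vertex set of $H$ be partitioned into anticliques, and let $m'_A$ denote the number of non-edges of $H$ lying inside these anticliques (i.e. pairs of distinct vertices belonging to the same anticlique of the partition). If $m'$ is the number of all non-edges of $H$, then $$n + m'_A \leq \rho(H) \leq n+m'.$$
   Context: All graphs are finite and simple. A coloring means a proper vertex coloring; an induced subgraph is rainbow if all its vertices have pairwise different colors. For a graph $H$, $\rho(H)$ is the least number $m$ such that there exists a graph $G$ on $m$ vertices such that every proper vertex coloring of $G$ contains a rainbow induced subgraph isomorphic to $H$. An anticlique is a set of pairwise non-adjacent vertices; a non-edge is an unordered pair of distinct non-adjacent vertices. *)

(* Defs.v *)
From mathcomp Require Import all_boot.
Set Implicit Arguments. Unset Strict Implicit. Unset Printing Implicit Defensive.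

Definition simple_graph (V : finType) (e : rel V) : Prop :=
  symmetric e /\ irreflexive e.

Definition proper_coloring (V : finType) (e : rel V) (c : V -> nat) : Prop :=
  forall x y, e x y -> c x != c y.

Definition rainbow_induced_copy (T V : finType) (eH : rel T) (eG : rel V)
    (c : V -> nat) (f : T -> V) : Prop :=
  injective f /\ (forall x y, eG (f x) (f y) = eH x y) /\ injective (c \o f).

(* There is a graph G on m vertices such that every proper colouring of G
   contains a rainbow induced subgraph isomorphic to H. rho(H) is the least
   such m. *)
Definition rho_witness (T : finType) (eH : rel T) (m : nat) : Prop :=
  exists eG : rel 'I_m, simple_graph eG /\
    forall c : 'I_m -> nat, proper_coloring eG c ->
      exists f : T -> 'I_m, rainbow_induced_copy eH eG c f.

Definition anticlique (T : finType) (e : rel T) (A : {set T}) : bool :=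
  [forall x in A, forall y in A, ~~ e x y].

Definition num_nonedges (T : finType) (e : rel T) : nat :=
  #|[set S : {set T} | (#|S| == 2) && anticlique e S]|.

Definition num_nonedges_in (T : finType) (P : {set {set T}}) : nat :=
  #|[set S : {set T} | (#|S| == 2) && [exists B in P, S \subset B]]|.

(* Main.v *)
Require Import Defs.
From mathcomp Require Import all_boot zify.

Section Lower.
Variables (T : finType) (eH : rel T) (P : {set {set T}}).
Hypothesis Hirr : irreflexive eH.
Hypothesis HP : partition P [set: T].
Hypothesis HA : forall A, A \in P -> anticlique eH A.

Definition pairs (S : {set T}) :=
  #|[set X : {set T} | [&& #|X| == 2, X \subset S & [exists B in P, X \subset B]]]|.

Lemma pairs0 : pairs set0 = 0.
Proof.
apply: eq_card0 => X; rewrite !inE subset0.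
by apply/and3P => [[/eqP X2 /eqP X0 _]]; rewrite X0 cards0 in X2.
Qed.

Lemma pairsD1 (S : {set T}) (w : T) : w \in S ->
  pairs S <= pairs (S :\ w) + #|(pblock P w :&: S) :\ w|.
Proof.
move=> wS.
have tP : trivIset P by case/and3P: HP.
have cP : cover P = [set: T] by case/and3P: HP => /eqP.
set B := pblock P w.
have BP : B \in P by apply: pblock_mem; rewrite cP inE.
have wB : w \in B by rewrite /B mem_pblock cP inE.
rewrite /pairs.
set PS := [set X : {set T} | _].
set PS' := [set X : {set T} | _].
set D := (B :&: S) :\ w.
have sub : PS \subset PS' :|: [set [set w; y] | y in D].
  apply/subsetP => X; rewrite !inE => /and3P [X2 XS /existsP [B' /andP [B'P XB']]].
  have [wX|wX] := boolP (w \in X).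
  - apply/orP; right.
    case/cards2P: X2 => a [b [ab Xe]].
    have [y [yw Xy]] : exists y, y != w /\ X = [set w; y].
      move: wX; rewrite Xe !inE; case/orP => /eqP wE; subst w.
        by exists b; split; [rewrite eq_sym|].
      by exists a; split => //; rewrite setUC.
    apply/imsetP; exists y => //.
    have yX : y \in X by rewrite Xy !inE eqxx orbT.
    have wB' : w \in B' by apply: (subsetP XB'); rewrite wX.
    have eB : B = B' by rewrite /B (def_pblock tP B'P wB').
    by rewrite !inE yw eB (subsetP XB' _ yX) /= (subsetP XS _ yX).
  - apply/orP; left; rewrite X2 subsetD1 XS wX /=.
    by apply/existsP; exists B'; rewrite B'P XB'.
apply: leq_trans (subset_leq_card sub) _.
rewrite cardsU.
have := leq_imset_card (fun y => [set w; y]) D.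
lia.
Qed.

Variables (V : finType) (eG : rel V).
Hypothesis Girr : irreflexive eG.

Definition indep (I : {set V}) := [forall x in I, forall y in I, ~~ eG x y].

Definition copy (c : V -> nat) (U : {set V}) (S : {set T}) (f : T -> V) :=
  [/\ {in S, forall x, f x \in U}, {in S &, forall x y, eG (f x) (f y) = eH x y}
   & {in S &, injective (c \o f)}].

Lemma main N (U : {set V}) : #|U| <= N ->
  exists c : V -> nat, (forall x y, x \in U -> y \in U -> eG x y -> c x != c y) /\
   forall (S : {set T}) (f : T -> V), #|U| < #|S| + pairs S -> ~ copy c U S f.
Proof.
elim: N U => [|N IH] U.
  rewrite leqn0 cards_eq0 => /eqP ->.
  exists (fun _ => 0); split; first by move=> x y; rewrite inE.
  move=> S f; case: (set_0Vmem S) => [->|[x xS]].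
    by rewrite !cards0 pairs0.
  by move=> _ [fU _ _]; have := fU x xS; rewrite inE.
rewrite leq_eqVlt ltnS; case/orP => [/eqP UN | ]; last exact: IH.
have [I /andP [IU Iind] Imax] : exists2 I : {set V}, (I \subset U) && indep I &
   forall J : {set V}, (J \subset U) && indep J -> #|J| <= #|I|.
  have P0 : (set0 \subset U) && indep set0.
    by rewrite sub0set; apply/forall_inP => x; rewrite inE.
  case: (@arg_maxnP _ set0 (fun J : {set V} => (J \subset U) && indep J) (fun J : {set V} => #|J|) P0) => I HI Hm.
  by exists I.
have I0 : 0 < #|I|.
  have [x xU] : exists x, x \in U.
    by apply/set0Pn; rewrite -card_gt0 UN.
  have : #|[set x]| <= #|I|.
    apply: Imax; rewrite sub1set xU /=.
    by apply/forall_inP => a /set1P ->; apply/forall_inP => b /set1P ->; rewrite Girr.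
  by rewrite cards1.
have cUI : #|U :\: I| = #|U| - #|I|.
  by rewrite cardsD (setIidPr IU).
have IleU : #|I| <= #|U| by apply: subset_leq_card.
have [c' [c'P c'K]] := IH (U :\: I) ltac:(lia).
exists (fun x => if x \in I then 0 else (c' x).+1); split.
  move=> x y xU yU exy.
  case xI: (x \in I); case yI: (y \in I) => //.
    by move/forall_inP: Iind => /(_ x xI) /forall_inP /(_ y yI); rewrite exy.
  rewrite eqSS; apply: c'P => //; by rewrite inE ?xI ?yI.
move=> S f hlt [fU fE fI].
have [w wS wsel] : exists2 w, w \in S & (forall x, x \in S -> f x \in I -> x = w).
  case: (set_0Vmem S) => [S0|[x0 x0S]].
    by move: hlt; rewrite S0 pairs0 cards0; lia.
  case: (pickP [pred x in S | f x \in I]) => [w /andP [wS wI]|none].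
    exists w => // x xS xI; apply: fI => //=; by rewrite xI wI.
  exists x0 => // x xS xI; have := none x; by rewrite /= xS xI.
set B := pblock P w.
have tP : trivIset P by case/and3P: HP.
have cP : cover P = [set: T] by case/and3P: HP => /eqP.
have BP : B \in P by apply: pblock_mem; rewrite cP inE.
have wB : w \in B by rewrite /B mem_pblock cP inE.
have BS : #|B :&: S| <= #|I|.
  have finj : {in B :&: S &, injective f}.
    move=> x y; rewrite !inE => /andP [_ xS] /andP [_ yS] e.
    by apply: fI => //=; rewrite e.
  rewrite -(card_in_imset finj); apply: Imax; apply/andP; split.
    apply/subsetP => z /imsetP [x]; rewrite inE => /andP [_ xS] ->; exact: fU.
  apply/forall_inP => a /imsetP [x]; rewrite inE => /andP [xB xS] ->.
  apply/forall_inP => b /imsetP [y]; rewrite inE => /andP [yB yS] ->.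
  rewrite fE //; by have := HA B BP; move/forall_inP => /(_ x xB) /forall_inP /(_ y yB).
have BS1 : #|B :&: S| = 1 + #|(B :&: S) :\ w|.
  by rewrite (cardsD1 w) inE wB wS.
have hp := pairsD1 S w wS.
have hS : #|S| = 1 + #|S :\ w| by rewrite (cardsD1 w) wS.
have hlt' : #|U :\: I| < #|S :\ w| + pairs (S :\ w).
  by rewrite cUI; rewrite -/B in hp; lia.
apply: (c'K (S :\ w) f hlt').
split.
- move=> x; rewrite !inE => /andP [xw xS]; rewrite fU // andbT.
  apply/negP => fxI; have xe := wsel x xS fxI; by move: xw; rewrite xe eqxx.
- by move=> x y; rewrite !inE => /andP [_ xS] /andP [_ yS]; apply: fE.
- move=> x y; rewrite !inE => /andP [xw xS] /andP [yw yS] /= e.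
  apply: fI => //=.
  case xI: (f x \in I); first by move: xw; rewrite (wsel x xS xI) eqxx.
  case yI: (f y \in I); first by move: yw; rewrite (wsel y yS yI) eqxx.
  by rewrite e.
Qed.
End Lower.

Section Upper.
Variables (T : finType) (eH : rel T).
Hypothesis Hsym : symmetric eH.
Hypothesis Hirr : irreflexive eH.

Definition r (v : T) : nat := enum_rank v.
Lemma r_inj : injective r.
Proof. by move=> x y /val_inj /enum_rank_inj. Qed.
Lemma r_lt v : r v < #|T|.
Proof. exact: ltn_ord. Qed.

Definition A (v : T) := [set u | (r u < r v) && ~~ eH u v].
Definition k (v : T) := #|A v|.
Definition W := {v : T & 'I_(k v).+1}.
Definition eW (x y : W) : bool := ((tag x == tag y) && (x != y)) || eH (tag x) (tag y).

Lemma greedy (c : W -> nat) : (forall x y, eW x y -> c x != c y) ->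
  exists f : T -> W, (forall v, tag (f v) = v) /\
    forall u v, u != v -> ~~ eH u v -> c (f u) != c (f v).
Proof.
move=> cP.
suff H : forall i, exists f : T -> W, (forall v, tag (f v) = v) /\
    forall u v, r u < r v -> r v < i -> ~~ eH u v -> c (f u) != c (f v).
  have [f [ft fP]] := H #|T|; exists f; split => // u v uv nuv.
  case: (ltngtP (r u) (r v)) => h.
  - exact: fP (r_lt _) nuv.
  - rewrite eq_sym; apply: fP (r_lt _) _ => //; by rewrite Hsym.
  - by move/r_inj: h => e; rewrite e eqxx in uv.
elim=> [|i [f [ft fP]]].
  exists (fun v => Tagged (fun v => 'I_(k v).+1) (ord0 : 'I_(k v).+1)); split => // u v.
case: (ltnP i #|T|) => hi; last first.
  exists f; split => // u v uv vi; apply: fP => //; have := r_lt v; lia.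
pose v := enum_val (Ordinal hi).
have rv : r v = i by rewrite /r /v enum_valK.
pose cols := [seq c (f u) | u <- enum (A v)].
pose s1 := [seq c (Tagged (fun v => 'I_(k v).+1) j) | j <- enum 'I_(k v).+1].
have : ~~ all (mem cols) s1.
  apply/negP => /allP sub.
  have u1 : uniq s1.
    rewrite map_inj_uniq ?enum_uniq // => j j' e.
    case: (eqVneq j j') => // jj.
    have : eW (Tagged (fun v => 'I_(k v).+1) j) (Tagged (fun v => 'I_(k v).+1) j').
      rewrite /eW /= eqxx /=; apply/orP; left.
      by rewrite eq_Tagged.
    by move/cP; rewrite e eqxx.
  have := uniq_leq_size u1 sub.
  by rewrite /s1 /cols !size_map -enumT size_enum_ord -cardE /k; lia.
case/allPn => col /mapP [j _ ->] notin.
exists (fun x => if x == v then Tagged (fun v => 'I_(k v).+1) j else f x); split.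
  by move=> x; case: eqP => [->|].
move=> u w uw wi nuw.
have uv : u != v by apply/eqP => e; move: uw wi; rewrite e rv; lia.
rewrite (negbTE uv).
case: (eqVneq w v) => [ew|wv].
  rewrite ew in uw nuw; apply/negP => /eqP e; move: notin; rewrite -e.
  by rewrite /cols; apply/negP/negPn; apply: map_f; rewrite mem_enum inE uw nuw.
apply: fP => //.
have : r w != i by rewrite -rv; apply/eqP => /r_inj ee; move: wv; rewrite ee eqxx.
lia.
Qed.

Lemma cardW : #|{: W}| <= #|T| + num_nonedges eH.
Proof.
rewrite card_tagged sumnE big_map big_enum /=.
under eq_bigr do rewrite card_ord -addn1.
rewrite big_split /= sum1_card addnC leq_add2l.
pose D := [set p : T * T | (r p.1 < r p.2) && ~~ eH p.1 p.2].
have -> : \sum_(i in T) k i = #|D|.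
  rewrite -sum1_card (partition_big (fun p : T * T => p.2) predT) //=.
  apply: eq_bigr => v _.
  rewrite sum1_card /k.
  have -> : #|A v| = #|(fun u => (u, v)) @: A v|.
    by rewrite card_imset // => a b [].
  apply: eq_card => p; apply/idP/idP.
    case/imsetP => u uA ->; rewrite unfold_in /= /D inE /= eqxx andbT.
    by move: uA; rewrite inE.
  rewrite {1}unfold_in /=; case: p => a b; rewrite /D inE /= => /andP [h /eqP eb]; subst b.
  by apply/imsetP; exists a => //; rewrite inE.
have inj : {in D &, injective (fun p : T * T => [set p.1; p.2])}.
  move=> [a b] [a' b']; rewrite !inE /= => /andP [h _] /andP [h' _] e.
  have ha : a \in [set a'; b'] by rewrite -e !inE eqxx.
  have hb : b \in [set a'; b'] by rewrite -e !inE eqxx orbT.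
  move: ha hb; rewrite !inE => /orP [] /eqP ea /orP [] /eqP eb; subst => //; lia.
rewrite -(card_in_imset inj); apply: subset_leq_card.
apply/subsetP => X /imsetP [[a b]]; rewrite !inE /= => /andP [h nab] ->.
have ab : a != b by apply/eqP => e; subst; lia.
rewrite cards2 ab /=.
apply/forall_inP => x; rewrite !inE => /orP [] /eqP ->;
apply/forall_inP => y; rewrite !inE => /orP [] /eqP ->;
by rewrite ?Hirr // Hsym.
Qed.
End Upper.

Theorem corollary2p2 (T : finType) (eH : rel T) (P : {set {set T}}) :
  simple_graph eH ->
  partition P [set: T] ->
  (forall A, A \in P -> anticlique eH A) ->
  (forall m, rho_witness eH m -> #|T| + num_nonedges_in P <= m) /\
  (exists m, rho_witness eH m /\ m <= #|T| + num_nonedges eH).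
Proof.
move=> [Hsym Hirr] HP HA; split.
  move=> m [eG [[Gsym Girr] Hw]].
  rewrite leqNgt; apply/negP => hlt.
  have [c [cP cK]] := @main _ _ _ HP HA _ _ Girr _ _ (leqnn #|[set: 'I_m]|).
  have [f [finj [fE fI]]] := Hw c (fun x y e => cP x y (in_setT x) (in_setT y) e).
  apply: (cK [set: T] f).
    rewrite !cardsT card_ord.
    have -> : pairs T P [set: T] = num_nonedges_in P.
      by apply: eq_card => X; rewrite !inE subsetT.
    exact: hlt.
  split.
  - by move=> x _; rewrite inE.
  - by move=> x y _ _; apply: fE.
  - by move=> x y _ _; apply: fI.
pose eG := fun i j : 'I_#|{: W T eH}| => eW T eH (enum_val i) (enum_val j).
exists #|{: W T eH}|; split; last exact: (@cardW _ _ Hsym Hirr).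
exists eG; split.
  split.
    by move=> i j; rewrite /eG /eW eq_sym Hsym [enum_val j == _]eq_sym.
  by move=> i; rewrite /eG /eW !eqxx /= Hirr.
move=> c cP.
pose c' := fun x : W T eH => c (enum_rank x).
have c'P : forall x y, eW T eH x y -> c' x != c' y.
  move=> x y e; apply: cP; by rewrite /eG !enum_rankK.
have [f [ft fP]] := @greedy _ _ Hsym c' c'P.
exists (fun v => enum_rank (f v)); split; [|split].
- move=> x y /enum_rank_inj e; by rewrite -(ft x) -(ft y) e.
- move=> x y; rewrite /eG !enum_rankK /eW !ft.
  case: (eqVneq x y) => [->|xy] /=; first by rewrite eqxx Hirr.
  by [].
- move=> x y /= e; apply/eqP; apply/negPn/negP => xy.
  have [exy|nexy] := boolP (eH x y).
    have : eW T eH (f x) (f y) by rewrite /eW !ft exy orbT.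
    by move/c'P; rewrite /c' e eqxx.
  by move: (fP x y xy nexy); rewrite /c' e eqxx.
Qed.
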